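(* Let $G$ be a graph with $N$ vertices and maximum degree $\Delta$, and let $R_{\max}$ be a positive integer. For each vertex subset $X$ with $\mathrm{diam}(X)\le R_{\max}$, let $h_X$ be an operator supported in $X$ (possibly zero, not necessarily Hermitian) with $h_X|W\rangle=h_X|\overline 0\rangle=0$. If for some $p\in\{0,\dots,N\}$ with $p\le N/(\Delta^{2R_{\max}}+1)$ one has $\left(\sum_{X:\mathrm{diam}(X)\le R_{\max}}h_X\right)|W^p\rangle=E'_p|W^p\rangle$ with $E'_p\in\mathbb{C}$, then $E'_p=0$.
   Context: System of $N$ qubits on the vertices of a graph $G$ with local basis $|0\rangle,|1\rangle$; $s_i^\dagger$ acts on vertex $i$ as $s^\dagger|0\rangle=|1\rangle$, $s^\dagger|1\rangle=0$; $|\overline 0\rangle=|0\rangle^{\otimes N}$. Distances are graph distances; for a vertex set $X$, $\mathrm{diam}(X)=1+\max_{i,j\in X}(\text{graph distance between }i,j)$. An operator is supported in $X$ if it acts as the identity outside $X$. $S^\dagger=\sum_i s_i^\dagger$; for $p=0,\dots,N$, $|W^p\rangle$ is the normalization of $(S^\dagger)^p|\overline 0\rangle$ (the equal-weight superposition of all basis states with exactly $p$ vertices in state $|1\rangle$), and $|W\rangle=|W^1\rangle$. *)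

(* Defs.v *)
From HB Require Import structures.
From mathcomp Require Import all_boot all_order all_algebra.
Set Implicit Arguments. Unset Strict Implicit. Unset Printing Implicit Defensive.
Import Order.TTheory GRing.Theory Num.Theory.
Local Open Scope ring_scope.

Section Defs.
Variable T : finType.

Definition simple_graph (e : rel T) := symmetric e /\ irreflexive e.

Definition max_degree (e : rel T) : nat := (\max_(i : T) #|[set j | e i j]|)%N.

Fixpoint ball (e : rel T) (d : nat) (i : T) : {set T} :=
  match d with
  | 0 => [set i]
  | d'.+1 => ball e d' i :|: [set j | [exists k in ball e d' i, e k j]]
  end.

(* diam(X) <= R, where diam(X) = 1 + max_{i,j in X} dist(i,j)
   (infinite distance between different components). *)
Definition diam_le (e : rel T) (X : {set T}) (R : nat) : bool :=
  [forall i in X, forall j in X, (0 < R)%N && (j \in ball e R.-1 i)].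

(* Computational basis states of N = #|T| qubits. *)
Definition basis := {ffun T -> bool}.

Variable C : numClosedFieldType.

(* Vectors (amplitudes) and operators (matrix kernels) on (C^2)^{\otimes N}. *)
Definition state := basis -> C.
Definition operator := basis -> basis -> C.

Definition apply (H : operator) (v : state) : state :=
  fun x => \sum_(y : basis) H x y * v y.

(* H is supported in X: H = h_X \otimes Id_{complement of X}. *)
Definition supported_in (X : {set T}) (H : operator) : Prop :=
  exists g : basis -> basis -> C,
    (forall x x' y y' : basis, (forall i, i \in X -> x i = x' i) ->
                       (forall i, i \in X -> y i = y' i) -> g x y = g x' y') /\
    (forall x y, H x y = if [forall i in ~: X, x i == y i] then g x y else 0).

Definition weight (x : basis) : nat := #|[set i | x i]|.

Definition Wp (p : nat) : state :=
  fun x => if weight x == p then (sqrtC ('C(#|T|, p))%:R)^-1 else 0.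

Definition W : state := Wp 1.

Definition zero_state : state := fun x => if weight x == 0%N then 1 else 0.

Definition zero_vec : state := fun _ => 0.

End Defs.

(* Main.v *)
Require Import Defs.
From mathcomp Require Import all_boot all_order all_algebra zify.
Import GRing.Theory Num.Theory.
Set Implicit Arguments. Unset Strict Implicit. Unset Printing Implicit Defensive.
Section Graph.
Variables (T : finType) (e : rel T).
Hypothesis se : simple_graph e.

Lemma ball_mem d i : i \in ball e d i.
Proof. elim: d => [|d IH] /=; first by rewrite inE. by rewrite inE IH. Qed.

Lemma in_ballS d i j : (j \in ball e d.+1 i) = (j \in ball e d i) || [exists k in ball e d i, e k j].
Proof. by rewrite /= !inE. Qed.

Lemma ball_left d i k j : e i k -> j \in ball e d k -> j \in ball e d.+1 i.
Proof.
move=> eik; elim: d j => [|d IH] j.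
  rewrite /= inE => /eqP ->; rewrite !inE; apply/orP; right; apply/existsP; exists i.
  by rewrite inE eqxx.
rewrite in_ballS => /orP [H|/existsP [m /andP [Hm emj]]].
  by rewrite in_ballS (IH _ H).
rewrite in_ballS; apply/orP; right; apply/existsP; exists m; by rewrite (IH _ Hm).
Qed.

Lemma ball_sym d i j : j \in ball e d i -> i \in ball e d j.
Proof.
elim: d i j => [|d IH] i j.
  by rewrite /= !inE => /eqP ->.
rewrite in_ballS => /orP [H|/existsP [k /andP [Hk ekj]]].
  by rewrite in_ballS (IH _ _ H).
apply: (ball_left (k := k)); last exact: IH.
by case: se => s _; rewrite s.
Qed.

Lemma card_nb (B : {set T}) :
  #|[set j | [exists k in B, e k j]]| <= #|B| * max_degree e.
Proof.
have -> : [set j | [exists k in B, e k j]] = \bigcup_(k in B) [set j | e k j].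
  apply/setP => j; rewrite inE; apply/existsP/bigcupP.
    by move=> [k /andP [kB ekj]]; exists k; rewrite ?inE.
  by move=> [k kB]; rewrite inE => ekj; exists k; rewrite kB.
apply: (@leq_trans (\sum_(k in B) #|[set j | e k j]|)).
  apply: (big_ind2 (fun (A : {set T}) n => #|A| <= n)) => //.
    by rewrite cards0.
  move=> A1 n1 A2 n2 h1 h2; apply: leq_trans (leq_card_setU _ _) _.
  exact: leq_add.
rewrite -sum_nat_const; apply: leq_sum => k _.
exact: (leq_bigmax (F := fun i => #|[set j | e i j]|) k).
Qed.

Lemma card_ball d i : #|ball e d i| <= (max_degree e).+1 ^ d.
Proof.
elim: d => [|d IH] /=; first by rewrite cards1.
apply: leq_trans (leq_card_setU _ _) _.
rewrite expnS mulSn.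
have := card_nb (ball e d i).
have : #|ball e d i| * max_degree e <= (max_degree e).+1 ^ d * max_degree e.
  by rewrite leq_mul2r IH orbT.
move: IH; lia.
Qed.

Lemma ball_deg1 d i : max_degree e <= 1 -> ball e d i \subset i |: [set j | e i j].
Proof.
move=> hd; elim: d => [|d IH] /=; first by rewrite sub1set setU11.
apply/subsetP => j; rewrite !inE => /orP [H|/existsP [k /andP [Hk ekj]]].
  by move/subsetP: IH => /(_ j H); rewrite !inE.
move/subsetP: IH => /(_ k Hk); rewrite !inE => /orP [/eqP kE|eik]; first by rewrite -kE ekj orbT.
have : #|[set j | e k j]| <= 1.
  exact: leq_trans (leq_bigmax (F := fun i => #|[set j | e i j]|) k) hd.
move/card_le1P => h.
have eki : e k i by case: se => s _; rewrite s.
have := h i; rewrite inE => /(_ eki j); rewrite !inE ekj => /esym/eqP ->.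
by rewrite eqxx.
Qed.

Lemma card_ball_bound R i : (0 < R)%N -> #|ball e R.-1 i| <= (max_degree e) ^ (2 * R) + 1.
Proof.
move=> R0.
case: (leqP (max_degree e) 1) => hd.
  apply: leq_trans (subset_leq_card (ball_deg1 R.-1 i hd)) _.
  rewrite cardsU1.
  have hdeg : #|[set j | e i j]| <= max_degree e.
    exact: (leq_bigmax (F := fun i => #|[set j | e i j]|) i).
  move: hdeg hd; case: (max_degree e) => [|[|//]] hdeg _.
    move: hdeg; rewrite leqn0 => /eqP ->; rewrite exp0n ?muln_gt0 // addn0 /=.
    by case: (i \notin _).
  rewrite exp1n; case: (i \notin _) => //.
  by move: hdeg; rewrite /= add0n; move=> h; apply: leq_trans h _.
apply: leq_trans (card_ball _ _) _.
apply: leq_trans (leq_addr 1 _).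
have h1 : (max_degree e).+1 ^ R.-1 <= ((max_degree e) ^ 2) ^ R.-1.
  case: R.-1 => [//|r]; rewrite leq_exp2r //.
  have : 2 * max_degree e <= max_degree e * max_degree e by rewrite leq_mul2r hd orbT.
  rewrite expnS expn1; lia.
apply: leq_trans h1 _.
rewrite -expnM leq_exp2l //; lia.
Qed.

Lemma greedy R B p (S : {set T}) :
  (0 < B)%N -> (forall i, #|ball e R i| <= B) -> p * B <= #|S| ->
  exists P : {set T}, [/\ P \subset S, #|P| = p &
     forall i j, i \in P -> j \in P -> i != j -> j \notin ball e R i].
Proof.
move=> B0 hB; elim: p S => [|p IH] S hS.
  exists set0; split; [exact: sub0set | exact: cards0 | by move=> i j; rewrite inE].
have : 0 < #|S| by apply: leq_trans hS; rewrite muln_gt0 B0.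
rewrite card_gt0 => /set0Pn [i iS].
have hS' : p * B <= #|S :\: ball e R i|.
  rewrite cardsD.
  have := subset_leq_card (subsetIr S (ball e R i)).
  have := hB i. move: hS; rewrite mulSn; lia.
have [P' [sP' cP' fP']] := IH _ hS'.
have iP' : i \notin P'.
  apply/negP => /(subsetP sP'); by rewrite inE ball_mem.
exists (i |: P'); split.
- by rewrite subUset sub1set iS (subset_trans sP') ?subsetDl.
- by rewrite cardsU1 iP' cP'.
move=> a b; rewrite !inE => /orP [/eqP ->|aP] /orP [/eqP ->|bP]; rewrite ?eqxx //.
- move=> _; move/subsetP: sP' => /(_ b bP); by rewrite inE => /andP [].
- move=> _; apply/negP => /ball_sym.
  move/subsetP: sP' => /(_ a aP); by rewrite inE => /andP [/negP].
- exact: fP'.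
Qed.
End Graph.
Local Open Scope ring_scope.
Section Ops.
Variables (T : finType) (C : numClosedFieldType).

Definition agreeOut (X : {set T}) (x y : basis T) := [forall i in ~: X, x i == y i].
Definition restr (X : {set T}) (x : basis T) : basis T := [ffun i => (i \in X) && x i].
Definition ext (X : {set T}) (x y' : basis T) : basis T :=
  [ffun i => if i \in X then y' i else x i].

Lemma apply_const (H : operator T C) (X : {set T}) (g : basis T -> basis T -> C) r (d : C) z :
  (forall x y, H x y = if agreeOut X x y then g x y else 0) ->
  apply H (fun y => if weight y == r then d else 0) z =
  d * \sum_(y | agreeOut X z y && (weight y == r)) g z y.
Proof.
move=> HH; rewrite /apply mulr_sumr [RHS]big_mkcond /=; apply: eq_bigr => y _.
rewrite HH; case: agreeOut; case: (weight y == r) => /=;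
  by rewrite ?mulr0 ?mul0r // mulrC.
Qed.

Lemma agreeOutP (X : {set T}) (x y : basis T) : agreeOut X x y -> forall i, i \notin X -> x i = y i.
Proof. by move=> /forallP H i iX; have := H i; rewrite inE iX => /eqP. Qed.

Lemma weight_split (X : {set T}) (x y : basis T) : agreeOut X x y ->
  weight y = (weight (restr X y) + #|[set i | x i] :\: X|)%N.
Proof.
move=> A; rewrite /weight -(cardsID X [set i | y i]); congr (_ + _)%N.
  by apply: eq_card => i; rewrite !inE ffunE andbC.
apply: eq_card => i; rewrite !inE; case iX: (i \in X) => //=.
by rewrite (agreeOutP A) ?iX.
Qed.

Lemma reindex_sum (X : {set T}) (x : basis T) (g : basis T -> basis T -> C) k :
  (forall x x' y y' : basis T, (forall i, i \in X -> x i = x' i) ->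
      (forall i, i \in X -> y i = y' i) -> g x y = g x' y') ->
  \sum_(y | agreeOut X x y && (weight y == (k + #|[set i | x i] :\: X|)%N)) g x y =
  \sum_(y | agreeOut X (restr X x) y && (weight y == k)) g (restr X x) y.
Proof.
move=> loc.
rewrite [RHS](reindex_onto (restr X) (ext X x)).
  apply: eq_big => y.
    case A: (agreeOut X x y).
      have -> : ext X x (restr X y) == y.
        apply/eqP/ffunP => i; rewrite !ffunE; case iX: (i \in X) => //.
        by rewrite (agreeOutP A) ?iX.
      have -> : agreeOut X (restr X x) (restr X y).
        by apply/forallP => i; rewrite inE !ffunE; case: (i \in X).
      by rewrite (weight_split A) eqn_add2r andbT.
    rewrite /=; apply/esym/negbTE; apply/negP => /andP [_ /eqP E].
    move/negbT: A => /negP; apply; apply/forallP => i; apply/implyP => iX.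
    by rewrite -E ffunE; rewrite inE in iX; rewrite (negbTE iX).
  move=> /andP [A _]; apply: loc => i iX; by rewrite ffunE iX.
move=> y' /andP [A _]; apply/ffunP => i; rewrite !ffunE.
case iX: (i \in X) => //.
by rewrite -(agreeOutP A) ?iX // ffunE iX.
Qed.

Lemma c_neq0 n p : (p <= n)%N -> (sqrtC ('C(n, p))%:R : C)^-1 != 0.
Proof.
by move=> h; rewrite invr_eq0 sqrtC_eq0 pnatr_eq0 -lt0n bin_gt0.
Qed.

Lemma term_zero (X : {set T}) (hX : operator T C) (p : nat) (x : basis T) :
  supported_in X hX -> apply hX (@W T C) = @zero_vec T C ->
  apply hX (@zero_state T C) = @zero_vec T C ->
  weight x = p -> (weight (restr X x) <= 1)%N ->
  apply hX (@Wp T C p) x = 0.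
Proof.
move=> [g [loc HH]] hW h0 wx wr.
have HH' : forall x y, hX x y = if agreeOut X x y then g x y else 0 by [].
rewrite /Wp (apply_const _ _ _ HH').
have Ax : agreeOut X x x by apply/forallP => i; rewrite eqxx implybT.
rewrite -wx (weight_split Ax) reindex_sum //.
apply/eqP; rewrite mulf_eq0; apply/orP; right; apply/eqP.
move: wr; case E: (weight (restr X x)) => [|[|//]] _.
  have := congr1 (fun f => f (restr X x)) h0.
  rewrite /zero_state (apply_const _ _ _ HH') /zero_vec mul1r; by [].
have := congr1 (fun f => f (restr X x)) hW.
rewrite /W /Wp (apply_const _ _ _ HH') /zero_vec => /eqP; rewrite mulf_eq0 => /orP [|/eqP //].
have hT : (0 < #|T|)%N.
  apply: leq_trans (max_card (mem [set i | restr X x i])).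
  by rewrite -/(weight (restr X x)) E.
by rewrite (negbTE (@c_neq0 #|T| 1 hT)).
Qed.
End Ops.
Unset Implicit Arguments.
Theorem proposition5 (T : finType) (e : rel T) (C : numClosedFieldType)
  (Rmax : nat) (h : {set T} -> operator T C) (p : nat) (E : C) :
  simple_graph e ->
  (0 < Rmax)%N ->
  (forall X : {set T}, diam_le e X Rmax ->
     supported_in X (h X) /\
     apply (h X) (@W T C) = @zero_vec T C /\
     apply (h X) (@zero_state T C) = @zero_vec T C) ->
  (p <= #|T|)%N ->
  (p * ((max_degree e) ^ (2 * Rmax) + 1) <= #|T|)%N ->
  apply (fun x y => \sum_(X : {set T} | diam_le e X Rmax) h X x y) (@Wp T C p)
    = (fun x => E * @Wp T C p x) ->
  E = 0.
Proof.
move=> se R0 hyp pT hp hE.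
have B0 : (0 < (max_degree e) ^ (2 * Rmax) + 1)%N by rewrite addn1.
have hp' : (p * ((max_degree e) ^ (2 * Rmax) + 1) <= #|[set: T]|)%N by rewrite cardsT.
have [P [_ cP fP]] := greedy se (R := Rmax.-1) B0 (fun i => card_ball_bound se i R0) hp'.
pose x : basis T := [ffun v => v \in P].
have wx : weight x = p.
  by rewrite /weight -cP; apply: eq_card => v; rewrite inE ffunE.
have key : apply (fun x y => \sum_(X : {set T} | diam_le e X Rmax) h X x y) (@Wp T C p) x = 0.
  rewrite /apply (eq_bigr (fun y => \sum_(X : {set T} | diam_le e X Rmax) h X x y * Wp C p y)); last first.
    by move=> y _; rewrite mulr_suml.
  rewrite exchange_big /=; apply: big1 => X HX.
  have [s1 [s2 s3]] := hyp X HX.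
  apply: (term_zero s1 s2 s3 wx).
  rewrite leqNgt; apply/negP => /card_gt1P [a [b [ha hb ab]]].
  rewrite !inE !ffunE in ha hb.
  move/andP: ha => [aX aP]; move/andP: hb => [bX bP].
  have := fP a b aP bP ab.
  move/forallP: HX => /(_ a); rewrite aX /= => /forallP /(_ b); rewrite bX /=.
  by move=> /andP [_ ->].
have := congr1 (fun f => f x) hE; rewrite key /= => /esym/eqP.
rewrite mulf_eq0 => /orP [/eqP //|].
by rewrite /Wp wx eqxx (negbTE (c_neq0 _ pT)).
Qed.
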